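(* Assume $b_1<n^*$ and $b_2<m^*$. Then in every Nash equilibrium $(\sigma^{1*},\sigma^{2*})$ of $\Gamma(b_1,b_2)$, the node basis of $\sigma^{1*}$ is a set cover. Furthermore, $\Gamma(b_1,b_2)$ has no Nash equilibrium in which $\sigma^{1*}$ or $\sigma^{2*}$ is a point mass (both players must randomize).
   Context: Detection model: finite nonempty sets $\mathcal V$, $\mathcal E$, monitoring sets $\mathcal C_i\subseteq\mathcal E$ ($i\in\mathcal V$) with every $e\in\mathcal E$ in some $\mathcal C_i$; $\mathcal C_S=\bigcup_{i\in S}\mathcal C_i$; $F(S,T)=|\mathcal C_S\cap T|$. Set cover: $S\subseteq\mathcal V$ with $\mathcal C_S=\mathcal E$; $n^*$ = minimum size of a set cover. Set packing: $T\subseteq\mathcal E$ with $|\mathcal C_i\cap T|\le1$ for all $i$; $m^*$ = maximum size of a set packing. Game $\Gamma(b_1,b_2)$ ($b_1,b_2$ positive integers): $\mathcal A_1=\{S\subseteq\mathcal V:|S|\le b_1\}$, $\mathcal A_2=\{T\subseteq\mathcal E:|T|\le b_2\}$; mixed strategies $\sigma^1\in\Delta(\mathcal A_1)$, $\sigma^2\in\Delta(\mathcal A_2)$ (independent); payoffs $U_1=\mathbb E[F(S,T)]$, $U_2=\mathbb E[|T|]-\mathbb E[F(S,T)]$; Nash equilibrium in mixed strategies as usual. The node basis of $\sigma^1$ is $\{i\in\mathcal V:\mathbb P_{S\sim\sigma^1}(i\in S)>0\}$. *)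

(* Defs.v *)
From HB Require Import structures.
From mathcomp Require Import all_boot all_order all_algebra.
Set Implicit Arguments. Unset Strict Implicit. Unset Printing Implicit Defensive.
Import Order.TTheory GRing.Theory Num.Theory.

Section Detection.
Variables (V E : finType) (C : V -> {set E}).

Definition CS (S : {set V}) : {set E} := \bigcup_(i in S) C i.
Definition Fdet (S : {set V}) (T : {set E}) : nat := #|CS S :&: T|.

Definition is_set_cover (S : {set V}) : bool := CS S == [set: E].
Definition is_set_packing (T : {set E}) : bool := [forall i, #|C i :&: T| <= 1].

(* n* : minimum size of a set cover (default #|V| is irrelevant when
   some cover exists, e.g. [set: V] under the covering assumption) *)
Definition n_star : nat := \big[minn/#|V|]_(S : {set V} | is_set_cover S) #|S|.
Definition m_star : nat := \max_(T : {set E} | is_set_packing T) #|T|.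

Local Open Scope ring_scope.
Variable R : realFieldType.

(* a mixed strategy over the action set {A : |A| <= b} *)
Definition mixed (T : finType) (b : nat) (sigma : {set T} -> R) : Prop :=
  [/\ forall A : {set T}, 0 <= sigma A,
      \sum_(A : {set T}) sigma A = 1 &
      forall A : {set T}, (b < #|A|)%N -> sigma A = 0].

Definition U1 (s1 : {set V} -> R) (s2 : {set E} -> R) : R :=
  \sum_(S : {set V}) \sum_(T : {set E}) s1 S * s2 T * (Fdet S T)%:R.

Definition U2 (s1 : {set V} -> R) (s2 : {set E} -> R) : R :=
  \sum_(S : {set V}) \sum_(T : {set E})
     s1 S * s2 T * ((#|T|)%:R - (Fdet S T)%:R).

Definition nash (b1 b2 : nat) (s1 : {set V} -> R) (s2 : {set E} -> R) : Prop :=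
  [/\ mixed b1 s1, mixed b2 s2,
      forall t1, mixed b1 t1 -> U1 t1 s2 <= U1 s1 s2 &
      forall t2, mixed b2 t2 -> U2 s1 t2 <= U2 s1 s2].

Definition node_basis (s1 : {set V} -> R) : {set V} :=
  [set i | 0 < \sum_(S : {set V} | i \in S) s1 S].

Definition point_mass (T : finType) (sigma : {set T} -> R) : Prop :=
  exists A, sigma A = 1.

End Detection.

(* Main.v *)
Require Import Defs.
From HB Require Import structures.
From mathcomp Require Import all_boot all_order all_algebra.
From mathcomp Require Import zify ring lra.
Set Implicit Arguments. Unset Strict Implicit. Unset Printing Implicit Defensive.
Import Order.TTheory GRing.Theory Num.Theory.

Lemma CS_sub (V E : finType) (C : V -> {set E}) (A B : {set V}) :
  A \subset B -> CS C A \subset CS C B.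
Proof.
move=> AB; apply/subsetP=> e /bigcupP[i iA eC].
by apply/bigcupP; exists i => //; apply: (subsetP AB).
Qed.

Lemma CS_U1 (V E : finType) (C : V -> {set E}) i (A : {set V}) e :
  e \in C i -> e \in CS C (i |: A).
Proof. by move=> eC; apply/bigcupP; exists i => //; rewrite setU11. Qed.

Lemma card_disj_sum (I X : finType) (S : {set I}) (D : I -> {set X}) (B : {set X}) :
  (forall j, j \in S -> D j \subset B) ->
  (forall j k e, j \in S -> k \in S -> e \in D j -> e \in D k -> j = k) ->
  (\sum_(j in S) #|D j| <= #|B|)%N.
Proof.
move=> sub dis.
have -> : (\sum_(j in S) #|D j| = \sum_(j in S) \sum_(e : X) (e \in D j))%N.
  by apply: eq_bigr => j _; rewrite -sum1_card big_mkcond /=; apply: eq_bigr => e _; case: (e \in D j).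
rewrite exchange_big /= -sum1_card [X in (_ <= X)%N]big_mkcond /=.
apply: leq_sum => e _.
case: (boolP [exists j in S, e \in D j]) => [/exists_inP[j0 j0S ej0]|/exists_inP nex].
  rewrite (bigD1 j0) //= ej0 big1 ?addn0.
    by rewrite (subsetP (sub _ j0S)).
  move=> k /andP[kS kj0]; case: (boolP (e \in D k)) => // ek.
  by move/eqP: kj0; case; apply: (dis k j0 e).
by rewrite big1 // => j jS; case: (boolP (e \in D j)) => // ej; case: nex; exists j.
Qed.

Lemma card_sum (X : finType) (A T : {set X}) :
  #|A :&: T| = (\sum_(f in T) (f \in A))%N.
Proof.
rewrite -sum1_card big_mkcond /= [RHS]big_mkcond /=.
by apply: eq_bigr => f _; rewrite inE; case: (f \in A); case: (f \in T).
Qed.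

Lemma Fdet_mono (V E : finType) (C : V -> {set E}) (S S' : {set V}) T :
  S' \subset S -> (Fdet C S' T <= Fdet C S T)%N.
Proof. by move=> h; apply: subset_leq_card; apply: setSI; apply: CS_sub. Qed.

Lemma gainN (V E : finType) (C : V -> {set E}) (S' S'' : {set V}) T e0 :
  CS C S'' \subset CS C S' -> e0 \notin CS C S'' -> e0 \in CS C S' ->
  (Fdet C S'' T + (e0 \in T) <= Fdet C S' T)%N.
Proof.
move=> sub n0 i0; rewrite /Fdet; case: (boolP (e0 \in T)) => eT.
  rewrite addn1; apply: proper_card; apply/properP; split; first by apply: setSI.
  by exists e0; rewrite !inE ?eT ?i0 // (negbTE n0).
by rewrite addn0; apply: subset_leq_card; apply: setSI.
Qed.

Lemma margN (V E : finType) (C : V -> {set E}) (S : {set V}) T :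
  (\sum_(j in S) (Fdet C S T - Fdet C (S :\ j) T) <= Fdet C S T)%N.
Proof.
have eq1 : forall j, (Fdet C S T - Fdet C (S :\ j) T =
   #|(CS C S :&: T) :\: CS C (S :\ j)|)%N.
  move=> j; rewrite cardsD /Fdet.
  have -> : CS C S :&: T :&: CS C (S :\ j) = CS C (S :\ j) :&: T.
    apply/setP => e; rewrite !inE; case: (boolP (e \in CS C (S :\ j))) => h.
      by rewrite (subsetP (CS_sub C (subsetDl S [set j])) _ h) /= andbT.
    by rewrite !andbF.
  by [].
under eq_bigr do rewrite eq1.
apply: card_disj_sum => [j _|j k e jS kS]; first exact: subsetDl.
rewrite !inE => /andP[nj /andP[/bigcupP[i iS ei] _]] /andP[nk _].
have ij : i = j.
  apply/eqP; apply/negPn/negP => ij; case/negP: nj; apply/bigcupP; exists i => //.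
  by rewrite !inE ij.
have ik : i = k.
  apply/eqP; apply/negPn/negP => ik; case/negP: nk; apply/bigcupP; exists i => //.
  by rewrite !inE ik.
by rewrite -ij -ik.
Qed.

Lemma packN (V E : finType) (C : V -> {set E}) (S : {set V}) P :
  is_set_packing C P -> (Fdet C S P <= #|S|)%N.
Proof.
move=> /forallP pk; rewrite /Fdet.
apply: (@leq_trans (\sum_(i in S) #|C i :&: P|)); last first.
  by rewrite -sum1_card; apply: leq_sum => i _; apply: pk.
rewrite -sum1_card.
have -> : (\sum_(i in S) #|C i :&: P| = \sum_(i in S) \sum_(e : E) (e \in C i :&: P))%N.
  by apply: eq_bigr => i _; rewrite -sum1_card big_mkcond /=; apply: eq_bigr => e _; case: (e \in _).
rewrite exchange_big /= big_mkcond /=; apply: leq_sum => e _.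
case: (boolP (e \in CS C S :&: P)) => // /setIP[/bigcupP[i iS ei] eP].
by rewrite (bigD1 i) //= inE ei eP.
Qed.

Lemma greedyN (V E : finType) (C : V -> {set E})
  (hcov : forall e : E, exists i : V, e \in C i) (T0 : {set E}) k :
  exists S : {set V}, (#|S| <= k)%N /\ (minn k #|T0| <= Fdet C S T0)%N.
Proof.
elim: k => [|k [S [Sk SF]]]; first by exists set0; rewrite cards0 /= min0n.
case: (boolP (T0 \subset CS C S)) => sub.
  exists S; split; first by apply: leq_trans Sk _.
  rewrite /Fdet; apply: leq_trans (geq_minr _ _) _.
  by apply: subset_leq_card; apply/subsetP => e eT; rewrite inE eT (subsetP sub).
have [e /andP[eS eT]] : exists e, (e \notin CS C S) && (e \in T0).
  move/subsetPn: sub => [e eT eS]; by exists e; rewrite eT eS.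
have [i ei] := hcov e.
exists (i |: S); split.
  by rewrite cardsU1; move: Sk; case: (i \in S) => /=; lia.
have := gainN T0 (CS_sub C (subsetUr [set i] S)) eS (CS_U1 S ei).
rewrite eT; move: SF; rewrite /minn; case: ifP; case: ifP; lia.
Qed.

Local Open Scope ring_scope.

Lemma sum_delta (R : realFieldType) (X : finType) (A : {set X}) (g : {set X} -> R) :
  \sum_(B : {set X}) (B == A)%:R * g B = g A.
Proof.
rewrite (bigD1 A) //= eqxx mul1r big1 ?addr0 // => B /negbTE ->; by rewrite mul0r.
Qed.

Lemma sum_delta1 (R : realFieldType) (X : finType) (A : {set X}) :
  \sum_(B : {set X}) (B == A)%:R = 1 :> R.
Proof.
rewrite -[RHS](sum_delta A (fun=> 1)); apply: eq_bigr => B _; by rewrite mulr1.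
Qed.

Lemma le_sum1 (R : realFieldType) (X : finType) (g : X -> R) A :
  (forall B, 0 <= g B) -> g A <= \sum_B g B.
Proof.
move=> h; rewrite (bigD1 A) //= lerDl; apply: sumr_ge0 => B _; exact: h.
Qed.

Lemma mixed_other (R : realFieldType) (X : finType) b (s : {set X} -> R) A B :
  mixed b s -> s A = 1 -> B != A -> s B = 0.
Proof.
case=> s0 s1 _ sA BA.
have : \sum_(C | C != A) s C = 0.
  by move: s1; rewrite (bigD1 A) //= sA; lra.
move/eqP; rewrite psumr_eq0 => [/allP h|C _]; last exact: s0.
by apply/eqP; apply: (implyP (h B (mem_index_enum _))).
Qed.

Lemma mixed_supp (R : realFieldType) (X : finType) b (s : {set X} -> R) :
  mixed b s -> exists A, 0 < s A.
Proof.
case=> s0 s1 _; case: (boolP [exists A, 0 < s A]) => [/existsP //|/existsPn h].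
have : \sum_A s A = 0 by apply: big1 => A _; apply/eqP; rewrite eq_le s0 andbT leNgt h.
by rewrite s1 => /eqP; rewrite oner_eq0.
Qed.

Lemma mixed_size (R : realFieldType) (X : finType) b (s : {set X} -> R) A :
  mixed b s -> 0 < s A -> (#|A| <= b)%N.
Proof.
case=> _ _ sz h; rewrite leqNgt; apply/negP => /sz e; by rewrite e ltxx in h.
Qed.

Lemma dev (R : realFieldType) (X : finType) b (s : {set X} -> R) (f : {set X} -> R) :
  mixed b s ->
  (forall t, mixed b t -> \sum_A t A * f A <= \sum_A s A * f A) ->
  (forall A : {set X}, (#|A| <= b)%N -> f A <= \sum_A s A * f A) /\
  (forall A B : {set X}, 0 < s A -> (#|B| <= b)%N -> f B <= f A).
Proof.
move=> ms opt; have [s0 s1 sz] := ms; split.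
  move=> A hA; rewrite -[f A](sum_delta A f); apply: opt; split.
  - by move=> B; rewrite ler0n.
  - by rewrite sum_delta1.
  - by move=> B hB; case: eqP => // eBA; rewrite eBA ltnNge hA in hB.
move=> A B sA hB; case: (eqVneq B A) => [->//|BA].
set t := fun D => s D + s A * ((D == B)%:R - (D == A)%:R).
have hA : (#|A| <= b)%N by apply: mixed_size ms sA.
have mt : mixed b t.
  split.
  - move=> D; rewrite /t; case: (eqVneq D A) => [->|DA].
      by rewrite eq_sym (negbTE BA) /= sub0r mulrN1 subrr.
    by rewrite /= subr0 addr_ge0 ?mulr_ge0 ?s0 ?ler0n ?ltW.
  - rewrite /t big_split /= s1 -big_distrr /= sumrB.
    by rewrite !sum_delta1 subrr mulr0 addr0.
  - move=> D hD; rewrite /t sz //.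
    have DB : (D == B) = false by apply/negbTE/eqP => e; rewrite e ltnNge hB in hD.
    have DA : (D == A) = false by apply/negbTE/eqP => e; rewrite e ltnNge hA in hD.
    by rewrite DB DA subrr mulr0 addr0.
have := opt t mt.
rewrite /t.
under eq_bigr do rewrite mulrDl.
rewrite big_split /= gerDl.
under eq_bigr do rewrite mulrBr mulrBl -mulrA -mulrA.
rewrite sumrB -!big_distrr /= !sum_delta -mulrBr pmulr_rle0 //.
by rewrite subr_le0.
Qed.

Lemma bigmin_le_seq (X : eqType) (r : seq X) (P : pred X) (f : X -> nat) x A :
  A \in r -> P A -> (\big[minn/x]_(S <- r | P S) f S <= f A)%N.
Proof.
elim: r => // a r IH; rewrite inE big_cons => /orP[/eqP <-|Ar] PA.
  by rewrite PA geq_minl.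
case: (P a); last exact: IH.
by apply: leq_trans (geq_minr _ _) _; apply: IH.
Qed.

Lemma nstar_le (V E : finType) (C : V -> {set E}) (A : {set V}) :
  is_set_cover C A -> (n_star C <= #|A|)%N.
Proof. by move=> h; apply: bigmin_le_seq => //; apply: mem_index_enum. Qed.

Lemma subset_card (X : finType) (P : {set X}) n :
  (n <= #|P|)%N -> exists Q : {set X}, Q \subset P /\ #|Q| = n.
Proof.
move=> h; have [k ek] : exists k, #|P| = (n + k)%N by exists (#|P| - n)%N; lia.
elim: k P ek {h} => [|k IH] P ek; first by exists P; rewrite ek addn0.
have : (0 < #|P|)%N by rewrite ek; lia.
case/card_gt0P => x xP.
have := cardsD1 x P; rewrite xP ek => e.
have [Q [QP eQ]] := IH (P :\ x) ltac:(lia).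
exists Q; split => //; apply: subset_trans QP _; exact: subsetDl.
Qed.

Definition valS (R : realFieldType) (V E : finType) (C : V -> {set E})
  (s2 : {set E} -> R) (S : {set V}) : R :=
  \sum_(T : {set E}) s2 T * (Fdet C S T)%:R.

Definition pe (R : realFieldType) (V E : finType) (C : V -> {set E})
  (s1 : {set V} -> R) (e : E) : R :=
  \sum_(S : {set V}) s1 S * (e \in CS C S)%:R.

Lemma U1E (R : realFieldType) (V E : finType) (C : V -> {set E})
  (t : {set V} -> R) (s2 : {set E} -> R) :
  U1 C t s2 = \sum_S t S * valS C s2 S.
Proof.
apply: eq_bigr => S _; rewrite /valS big_distrr; apply: eq_bigr => T _.
by rewrite /= mulrA.
Qed.

Lemma FdetR (R : realFieldType) (V E : finType) (C : V -> {set E}) S T :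
  (Fdet C S T)%:R = \sum_(f in T) (f \in CS C S)%:R :> R.
Proof. by rewrite /Fdet card_sum natr_sum. Qed.

Lemma U2E (R : realFieldType) (V E : finType) (C : V -> {set E}) b
  (s1 : {set V} -> R) (t : {set E} -> R) :
  mixed b s1 ->
  U2 C s1 t = \sum_T t T * ((#|T|)%:R - \sum_(f in T) pe C s1 f).
Proof.
case=> _ s11 _; rewrite /U2 exchange_big /=; apply: eq_bigr => T _.
have hpe : \sum_(f in T) pe C s1 f = \sum_S s1 S * (Fdet C S T)%:R.
  rewrite /pe exchange_big /=; apply: eq_bigr => S _; by rewrite FdetR big_distrr.
rewrite hpe -[X in _ = _ * (X - _)]mul1r -s11 big_distrl /= -sumrB big_distrr /=.
apply: eq_bigr => S _; ring.
Qed.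

Lemma sumU (R : realFieldType) (V E : finType) (C : V -> {set E}) b
  (s1 : {set V} -> R) (s2 : {set E} -> R) :
  mixed b s1 ->
  U1 C s1 s2 + U2 C s1 s2 = \sum_T s2 T * (#|T|)%:R.
Proof.
case=> _ s11 _; rewrite /U1 /U2 -big_split /=.
under eq_bigr do rewrite -big_split /=.
rewrite exchange_big /=; apply: eq_bigr => T _.
rewrite -[RHS]mul1r -s11 big_distrl /=; apply: eq_bigr => S _; ring.
Qed.

Lemma ge0_cases (R : realFieldType) (x : R) : 0 <= x -> x = 0 \/ 0 < x.
Proof. by rewrite le0r => /orP[/eqP->|->]; [left|right]. Qed.

Theorem proposition3 (R : realFieldType) (V E : finType) (C : V -> {set E})
  (hV : (0 < #|V|)%N) (hE : (0 < #|E|)%N)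
  (hcov : forall e : E, exists i : V, e \in C i)
  (b1 b2 : nat) (hb1 : (0 < b1)%N) (hb2 : (0 < b2)%N)
  (hn : (b1 < n_star C)%N) (hm : (b2 < m_star C)%N)
  (s1 : {set V} -> R) (s2 : {set E} -> R) :
  nash C b1 b2 s1 s2 ->
  [/\ is_set_cover C (node_basis s1), ~ point_mass s1 & ~ point_mass s2].
Proof.
move=> [m1 m2 n1 n2].
have [s10 s11 s1z] := m1; have [s20 s21 s2z] := m2.
have [D1 O1] := dev (f := valS C s2) m1
  (fun t mt => ltac:(by rewrite -!U1E; apply: n1)).
have [D2 O2] := dev (f := fun T => (#|T|)%:R - \sum_(f in T) pe C s1 f) m2
  (fun t mt => ltac:(by rewrite -!(U2E _ _ m1); apply: n2)).
rewrite -U1E in D1; rewrite -(U2E _ _ m1) in D2.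
set u1 := U1 C s1 s2 in D1 *; set u2 := U2 C s1 s2 in D2 *.
have HS : u1 + u2 <= b2%:R.
  rewrite /u1 /u2 (sumU _ _ m1).
  apply: (@le_trans _ _ (\sum_T s2 T * b2%:R)); last by rewrite -big_distrl /= s21 mul1r.
  apply: ler_sum => T _; case: (ge0_cases (s20 T)) => [->|sT]; first by rewrite !mul0r.
  by rewrite ler_wpM2l ?s20 // ler_nat (mixed_size m2 sT).
have pe0 : forall f, 0 <= pe C s1 f.
  by move=> f; apply: sumr_ge0 => S _; rewrite mulr_ge0 ?s10 ?ler0n.
have pe_pack : forall P, is_set_packing C P -> \sum_(f in P) pe C s1 f <= b1%:R.
  move=> P pk; rewrite /pe exchange_big /=.
  apply: (@le_trans _ _ (\sum_S s1 S * b1%:R)); last by rewrite -big_distrl /= s11 mul1r.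
  apply: ler_sum => S _; rewrite -big_distrr /= -FdetR.
  case: (ge0_cases (s10 S)) => [->|sS]; first by rewrite !mul0r.
  rewrite ler_wpM2l ?s10 // ler_nat.
  exact: leq_trans (packN S pk) (mixed_size m1 sS).
have LL : b1%:R <= u1 -> False.
  move=> hu1.
  have [P [pk hP]] : exists P, is_set_packing C P /\ (b2 < #|P|)%N.
    case: (boolP [exists P : {set E}, is_set_packing C P && (b2 < #|P|)%N]).
      by case/existsP => P /andP[pk hP]; exists P.
    move/existsPn => h; exfalso.
    have : (m_star C <= b2)%N.
      apply/bigmax_leqP => P pk; move: (h P); by rewrite pk /= -leqNgt.
    clear -hm; lia.
  have [Q [QP cQ]] := subset_card (n := b2.+1) hP.
  have qk : is_set_packing C Q.
    apply/forallP => i; apply: leq_trans _ (forallP pk i).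
    by apply: subset_leq_card; apply: setIS.
  set SQ := \sum_(f in Q) pe C s1 f.
  have hSQ : SQ <= b1%:R by apply: pe_pack.
  have he : forall e, e \in Q -> b2%:R - (SQ - pe C s1 e) <= u2.
    move=> e eQ.
    have ce : #|Q :\ e| = b2 by have := cardsD1 e Q; rewrite eQ cQ; clear -hb2; lia.
    have h := D2 (Q :\ e) ltac:(by rewrite ce).
    have -> : SQ - pe C s1 e = \sum_(f in Q :\ e) pe C s1 f.
      by rewrite /SQ (big_setD1 e eQ) /=; ring.
    by rewrite -ce.
  have hsum : \sum_(e in Q) (b2%:R - (SQ - pe C s1 e)) <= \sum_(e in Q) u2.
    by apply: ler_sum => e eQ; exact: he.
  rewrite sumr_const cQ in hsum.
  rewrite (eq_bigr (fun e => (b2%:R - SQ) + pe C s1 e)) in hsum; last by move=> e _; ring.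
  have e1 : forall x : R, x *+ b2.+1 = x * (b2%:R + 1).
    by move=> x; rewrite mulrSr mulrDr mulr1 mulr_natr.
  rewrite big_split /= sumr_const cQ -/SQ !e1 in hsum.
  have hb1' : 0 < b1%:R :> R by rewrite ltr0n.
  have hb2' : 0 <= b2%:R :> R by rewrite ler0n.
  have p1 : u2 * b2%:R <= (b2%:R - b1%:R) * b2%:R by apply: ler_wpM2r => //; lra.
  have p2 : SQ * b2%:R <= b1%:R * b2%:R by apply: ler_wpM2r.
  lra.
have notcov : forall S : {set V}, 0 < s1 S -> exists e, e \notin CS C S.
  move=> S sS; have hS := mixed_size m1 sS.
  case: (boolP [exists e, e \notin CS C S]) => [/existsP //|/existsPn h]; exfalso.
  have : is_set_cover C S.
    by apply/eqP/setP => e; rewrite inE; move: (h e); rewrite negbK.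
  move/nstar_le; clear -hS hn; lia.
have L0 : u2 <= 0 -> False.
  move=> hu2; have [S sS] := mixed_supp m1; have [e he] := notcov S sS.
  have := D2 [set e]; rewrite cards1 big_set1 => /(_ hb2) h1.
  have : 0 < 1 - pe C s1 e.
    have -> : 1 - pe C s1 e = \sum_S' s1 S' * (1 - (e \in CS C S')%:R).
      by under [RHS]eq_bigr do rewrite mulrBr mulr1; rewrite sumrB s11.
    have hge : forall S' : {set V}, 0 <= s1 S' * (1 - (e \in CS C S')%:R).
      by move=> S'; rewrite mulr_ge0 ?s10 //; case: (e \in _); rewrite /= ?subrr ?subr0.
    have := @le_sum1 _ _ _ S hge; rewrite (negbTE he) subr0 mulr1.
    by apply: lt_le_trans.
  lra.
have partA : is_set_cover C (node_basis s1).
  apply/negPn/negP => ncov.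
  have [e0 he0] : exists e0, e0 \notin CS C (node_basis s1).
    case: (boolP [exists e, e \notin CS C (node_basis s1)]) => [/existsP //|/existsPn h].
    by case/negP: ncov; apply/eqP/setP => e; rewrite inE; move: (h e); rewrite negbK.
  have suppB : forall S, 0 < s1 S -> S \subset node_basis s1.
    move=> S sS; apply/subsetP => i iS; rewrite inE.
    apply: (lt_le_trans sS); rewrite (bigD1 S) //= lerDl.
    by apply: sumr_ge0 => S' _; apply: s10.
  have eS : forall S, 0 < s1 S -> e0 \notin CS C S.
    move=> S sS; apply: contra he0; apply/subsetP; apply: CS_sub; exact: suppB.
  have pe00 : pe C s1 e0 = 0.
    apply: big1 => S _; case: (ge0_cases (s10 S)) => [->|sS]; first by rewrite mul0r.
    by rewrite (negbTE (eS S sS)) mulr0.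
  have [i0 hi0] := hcov e0.
  case: (eqVneq (\sum_T s2 T * (e0 \in T)%:R) 1) => [q1|q1].
    have gainv : forall (S' S'' : {set V}), CS C S'' \subset CS C S' ->
        e0 \notin CS C S'' -> e0 \in CS C S' -> valS C s2 S'' + 1 <= valS C s2 S'.
      move=> S' S'' h1 h2 h3; rewrite -q1 /valS -big_split /=.
      apply: ler_sum => T _; rewrite -mulrDr ler_wpM2l ?s20 // -natrD ler_nat.
      exact: gainN.
    have Hval : forall S, 0 < s1 S -> b1%:R <= valS C s2 S.
      move=> S sS; have hS := mixed_size m1 sS; have e0S := eS S sS.
      case: (ltnP #|S| b1) => hlt.
        have h1 := O1 S (i0 |: S) sS ltac:(by clear -hlt; rewrite cardsU1; move: hlt; case: (i0 \in S) => /=; lia).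
        have h2 := gainv (i0 |: S) S (CS_sub C (subsetUr [set i0] S)) e0S (CS_U1 S hi0).
        lra.
      have mj : forall j, j \in S -> 1 <= valS C s2 S - valS C s2 (S :\ j).
        move=> j jS.
        have cj := cardsD1 j S; rewrite jS in cj.
        have h1 := O1 S (i0 |: (S :\ j)) sS ltac:(by clear -cj hS; rewrite cardsU1; case: (i0 \in _) => /=; lia).
        have e0j : e0 \notin CS C (S :\ j).
          by apply: contra e0S; apply/subsetP; apply: CS_sub; apply: subsetDl.
        have h2 := gainv (i0 |: (S :\ j)) (S :\ j) (CS_sub C (subsetUr [set i0] _)) e0j (CS_U1 _ hi0).
        lra.
      have hsum : \sum_(j in S) (1 : R) <= \sum_(j in S) (valS C s2 S - valS C s2 (S :\ j)).
        by apply: ler_sum => j jS; apply: mj.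
      rewrite sumr_const in hsum.
      have : \sum_(j in S) (valS C s2 S - valS C s2 (S :\ j)) <= valS C s2 S.
        have -> : \sum_(j in S) (valS C s2 S - valS C s2 (S :\ j)) =
           \sum_T s2 T * (\sum_(j in S) (Fdet C S T - Fdet C (S :\ j) T))%:R.
          rewrite /valS.
          under eq_bigr do rewrite -sumrB.
          rewrite exchange_big /=; apply: eq_bigr => T _.
          rewrite natr_sum big_distrr /=; apply: eq_bigr => j _.
          by rewrite natrB ?Fdet_mono ?subsetDl // mulrBr.
        by apply: ler_sum => T _; rewrite ler_wpM2l ?s20 // ler_nat margN.
      move=> h; apply: le_trans h; apply: le_trans hsum.
      by rewrite -[b1%:R]mulr1n -mulr_natr mul1r ler_nat.
    apply: LL; rewrite /u1 U1E.
    apply: (@le_trans _ _ (\sum_S s1 S * b1%:R)); first by rewrite -big_distrl /= s11 mul1r.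
    apply: ler_sum => S _; case: (ge0_cases (s10 S)) => [->|sS]; first by rewrite !mul0r.
    by rewrite ler_wpM2l ?s10 // Hval.
  have [T [sT e0T]] : exists T, 0 < s2 T /\ e0 \notin T.
    case: (boolP [exists T, (0 < s2 T) && (e0 \notin T)]).
      by case/existsP => T /andP[h1 h2]; exists T.
    move/existsPn => h; case/eqP: q1; apply: eq_trans _ s21; apply: eq_bigr => T _.
    case: (ge0_cases (s20 T)) => [->|sT]; first by rewrite mul0r.
    by move: (h T); rewrite sT /= negbK => ->; rewrite mulr1.
  have hT := mixed_size m2 sT.
  have cT : #|T| = b2.
    apply/eqP; rewrite eqn_leq hT /=; rewrite leqNgt; apply/negP => hlt.
    have h1 := O2 T (e0 |: T) sT ltac:(by clear -hlt e0T; rewrite cardsU1 e0T; lia).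
    move: h1; rewrite cardsU1 e0T big_setU1 //= pe00 add0r natrD; lra.
  have [f fT] : exists f, f \in T.
    by apply/card_gt0P; rewrite cT.
  have pf : forall g, g \in T -> pe C s1 g <= 0.
    move=> g gT.
    have cg := cardsD1 g T; rewrite gT in cg.
    have e0g : e0 \notin T :\ g by rewrite inE negb_and e0T orbT.
    have h1 := O2 T (e0 |: (T :\ g)) sT ltac:(by clear -cg hT e0g; rewrite cardsU1 e0g; lia).
    move: h1; rewrite cardsU1 e0g big_setU1 //= pe00 add0r (big_setD1 g gT) /=.
    rewrite (_ : #|T :\ g| = (#|T| - 1)%N); last by clear -cg; lia.
    rewrite (_ : (~~ false + (#|T| - 1))%N = #|T|); last by clear -cg; lia.
    lra.
  have hw : b2%:R <= u2.
    apply: le_trans (D2 T hT); rewrite cT.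
    have : \sum_(g in T) pe C s1 g <= 0 by apply: sumr_le0 => g gT; apply: pf.
    lra.
  have [i hi] := hcov f.
  have h1 := D1 [set i] ltac:(by rewrite cards1).
  have : 0 < valS C s2 [set i].
    apply: (lt_le_trans _ (@le_sum1 _ _ (fun T' => s2 T' * (Fdet C [set i] T')%:R) T _)).
      rewrite mulr_gt0 // ltr0n /Fdet card_gt0; apply/set0Pn; exists f.
      by rewrite inE fT andbT; apply/bigcupP; exists i; rewrite ?inE.
    by move=> T'; rewrite mulr_ge0 ?s20 ?ler0n.
  lra.
split => //.
  move=> [A sA]; have sA' : 0 < s1 A by rewrite sA ltr01.
  have : is_set_cover C A.
    apply/eqP/setP => e; rewrite inE; move/eqP/setP: partA => /(_ e); rewrite inE => he.
    apply: (subsetP (CS_sub C _)) he; apply/subsetP => i; rewrite inE.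
    case: (boolP (i \in A)) => // iA.
    rewrite big1 ?ltxx // => S iS; apply: (mixed_other m1 sA).
    by apply: contraNneq iA => <-.
  move/nstar_le; have := mixed_size m1 sA'; clear -hn; lia.
move=> [T0 sT0]; have sT0' : 0 < s2 T0 by rewrite sT0 ltr01.
have hT0 := mixed_size m2 sT0'.
have [S' [hS' hF]] := greedyN hcov T0 b1.
have hv : (Fdet C S' T0)%:R <= u1.
  apply: le_trans (D1 S' hS'); rewrite /valS.
  apply: le_trans (@le_sum1 _ _ (fun T => s2 T * (Fdet C S' T)%:R) T0 _).
    by rewrite sT0 mul1r.
  by move=> T; rewrite mulr_ge0 ?s20 ?ler0n.
case: (leqP b1 #|T0|) => hb.
  apply: LL; apply: le_trans hv; rewrite ler_nat; move: hF; rewrite /minn; case: ifP; clear -hb; lia.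
apply: L0.
have : u1 + u2 = #|T0|%:R.
  rewrite /u1 /u2 (sumU _ _ m1) (bigD1 T0) //= sT0 mul1r big1 ?addr0 // => T TT0.
  by rewrite (mixed_other m2 sT0 TT0) mul0r.
have : (#|T0|%:R : R) <= (Fdet C S' T0)%:R.
  by rewrite ler_nat; move: hF; rewrite /minn; case: ifP; clear -hb; lia.
lra.
Qed.
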